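(* Let $\Phi=\vec a_1\wedge\cdots\wedge\vec a_m$, and let $\hat\Phi$ be its pruned formula. For $1\le M\le m$ define $$\Delta(M)=\mathbb{E}\left[\log\frac{Z(\hat\Phi_1(M,m-M))}{Z(\hat\Phi_1(M-1,m-M))}\cdot\log\frac{Z(\hat\Phi_2(M,m-M))}{Z(\hat\Phi_2(M-1,m-M))}\right],$$ $$\Delta'(M)=\mathbb{E}\left[\log\frac{Z(\hat\Phi_1(M-1,m-M+1))}{Z(\hat\Phi_1(M-1,m-M))}\cdot\log\frac{Z(\hat\Phi_2(M-1,m-M+1))}{Z(\hat\Phi_2(M-1,m-M))}\right].$$ Then $$\mathrm{Var}[\log Z(\hat\Phi)]=\sum_{M=1}^m\big(\Delta(M)-\Delta'(M)\big).$$
   Context: A 2-CNF is a conjunction of clauses, each the disjunction of two literals on two distinct variables. $Z(\cdot)$ denotes the number of satisfying assignments. Fix $0<d<2$ and $m=m_n\sim dn/2$. A uniformly random clause is drawn uniformly from the $4\binom n2$ clauses on two distinct variables among $x_1,\dots,x_n$. Let $(\vec a_i)_{i\ge1}$, $(\vec a'_i)_{i\ge1}$, $(\vec a''_i)_{i\ge1}$ be mutually independent sequences of independent uniformly random clauses. For integers $M,M'\ge0$ set $$\Phi_1(M,M')=\vec a_1\wedge\cdots\wedge\vec a_M\wedge\vec a'_1\wedge\cdots\wedge\vec a'_{M'},\qquad \Phi_2(M,M')=\vec a_1\wedge\cdots\wedge\vec a_M\wedge\vec a''_1\wedge\cdots\wedge\vec a''_{M'}.$$ Write $\hat\Phi_h(M,M')$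 for the pruned formula of $\Phi_h(M,M')$. Pruning is defined as follows. For a 2-CNF $\Psi$ and a set $\mathcal L_0$ of literals, let $\mathcal L(\Psi,\mathcal L_0)$ be the closure of $\mathcal L_0$ under: if $\Psi$ has a clause $l\vee\neg l'$ with $l'\in\mathcal L$, add $l$. Let $\mathcal V_0$ be the set of variables $x$ with both $x,\neg x\in\mathcal L(\Psi,\mathcal L_0)$. The conflict clauses $\mathcal C(\Psi,\mathcal L_0)$ are the clauses of $\Psi$ both of whose variables lie in $\mathcal V_0$. Then $\hat\Psi$ is $\Psi$ with all clauses in $\bigcup_l\mathcal C(\Psi,\{l\})$ removed, $l$ ranging over all literals. Pruned formulas are always satisfiable. *)

(* Defs.v *)
From Stdlib Require Import Reals.
From mathcomp Require Import all_boot.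
Set Implicit Arguments. Unset Strict Implicit. Unset Printing Implicit Defensive.

Section TwoCNF.
Variable n : nat.

(* A literal on x_1..x_n: (x, true) is the positive literal x, (x, false) is ~x. *)
Definition lit := ('I_n * bool)%type.
Definition negl (l : lit) : lit := (l.1, ~~ l.2).

(* A clause on two distinct variables: (i, j, si, sj) with i < j, standing for
   the disjunction of the literals (i,si) and (j,sj).  There are exactly
   4 * 'C(n,2) of them. *)
Definition clause := {c : 'I_n * 'I_n * bool * bool | (c.1.1.1 < c.1.1.2)%N}.
Definition lit1 (c : clause) : lit := ((val c).1.1.1, (val c).1.2).
Definition lit2 (c : clause) : lit := ((val c).1.1.2, (val c).2).

Definition cnf := seq clause.

Definition assignment := {ffun 'I_n -> bool}.
Definition lit_sat (s : assignment) (l : lit) : bool := s l.1 == l.2.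
Definition clause_sat (s : assignment) (c : clause) : bool :=
  lit_sat s (lit1 c) || lit_sat s (lit2 c).
Definition cnf_sat (s : assignment) (F : cnf) : bool := all (clause_sat s) F.

Definition Z (F : cnf) : nat := #|[set s : assignment | cnf_sat s F]|.

(* One closure step: if F has a clause l \/ ~l' and l' is in the set, add l. *)
Definition implies (F : cnf) : rel lit := fun l' l =>
  has (fun c => ((lit1 c == l) && (lit2 c == negl l'))
             || ((lit2 c == l) && (lit1 c == negl l'))) F.

(* L(F, L0): closure of L0 under the rule above = literals reachable from L0. *)
Definition closureL (F : cnf) (L0 : {set lit}) : {set lit} :=
  [set l | [exists l0 in L0, connect (implies F) l0 l]].

Definition V0 (F : cnf) (L0 : {set lit}) : {set 'I_n} :=
  [set x | ((x, true) \in closureL F L0) && ((x, false) \in closureL F L0)].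

Definition conflict (F : cnf) (L0 : {set lit}) (c : clause) : bool :=
  (c \in F) && ((lit1 c).1 \in V0 F L0) && ((lit2 c).1 \in V0 F L0).

Definition prune (F : cnf) : cnf :=
  [seq c <- F | ~~ [exists l : lit, conflict F [set l] c]].

(* The probability space: three independent sequences of m uniform clauses
   (only the first m clauses of each sequence are ever used). *)
Definition Omega (m : nat) := (m.-tuple clause * m.-tuple clause * m.-tuple clause)%type.

Definition Expect (m : nat) (f : Omega m -> R) : R :=
  Rdiv (\big[Rplus/R0]_(w <- enum {: Omega m}) f w) (INR #|{: Omega m}|).

Definition Var (m : nat) (f : Omega m -> R) : R :=
  Rminus (Expect (fun w => Rmult (f w) (f w))) (Rmult (Expect f) (Expect f)).

Definition Phi1 (m : nat) (w : Omega m) (M M' : nat) : cnf :=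
  take M w.1.1 ++ take M' w.1.2.
Definition Phi2 (m : nat) (w : Omega m) (M M' : nat) : cnf :=
  take M w.1.1 ++ take M' w.2.

Definition logratio (F G : cnf) : R := ln (Rdiv (INR (Z F)) (INR (Z G))).

Definition DeltaM (m M : nat) : R :=
  Expect (fun w : Omega m =>
    Rmult (logratio (prune (Phi1 w M (m - M))) (prune (Phi1 w M.-1 (m - M))))
          (logratio (prune (Phi2 w M (m - M))) (prune (Phi2 w M.-1 (m - M))))).

Definition DeltaM' (m M : nat) : R :=
  Expect (fun w : Omega m =>
    Rmult (logratio (prune (Phi1 w M.-1 (m - M).+1)) (prune (Phi1 w M.-1 (m - M))))
          (logratio (prune (Phi2 w M.-1 (m - M).+1)) (prune (Phi2 w M.-1 (m - M))))).

Definition logZhat (m : nat) (w : Omega m) : R := ln (INR (Z (prune w.1.1))).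

End TwoCNF.

(* Main.v *)
From HB Require Import structures.
Require Import Defs.
From Stdlib Require Import Reals Lra FunctionalExtensionality.
From mathcomp Require Import all_boot zify.
Set Implicit Arguments. Unset Strict Implicit. Unset Printing Implicit Defensive.
Section Sat.
Variable n : nat.

Lemma negl_invol (l : lit n) : negl (negl l) = l.
Proof. by case: l => x b; rewrite /negl /= negbK. Qed.

Lemma implies_contra (F : cnf n) a b : Defs.implies F a b -> Defs.implies F (negl b) (negl a).
Proof.
move=> /hasP [c cF H]; apply/hasP; exists c => //; rewrite negl_invol.
by case/orP: H => /andP [h1 h2]; apply/orP; [right|left]; rewrite h1 h2.
Qed.

Lemma connect_contra (F : cnf n) a b :
  connect (Defs.implies F) a b -> connect (Defs.implies F) (negl b) (negl a).
Proof.
move/connectP=> [p Hp ->]; elim: p a Hp => [|y p IH] a /= Hp; first exact: connect0.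
case/andP: Hp => H1 H2; apply: connect_trans (IH _ H2) _.
by apply: connect1; apply: implies_contra.
Qed.

Lemma sat_aux k : forall G : cnf n, (size G <= k)%N ->
  (forall l, ~~ connect (Defs.implies G) l (negl l)) -> exists s, cnf_sat s G.
Proof.
elim: k => [|k IH] G.
  by case: G => // _ _; exists [ffun => true].
case: G => [|c G] Hs Hno; first by exists [ffun => true].
set G0 := c :: G.
set x := lit1 c.
pose Rs := fun l => connect (Defs.implies G0) x l.
pose asg := fun v => Rs (v, true) || Rs (v, false).
pose G' := [seq c0 <- G0 | ~~ asg (lit1 c0).1 && ~~ asg (lit2 c0).1].
have asgx : asg x.1.
  have : forall l, Rs l -> asg l.1 by case=> v [] H; rewrite /asg /= H ?orbT.
  by apply; apply: connect0.
have sG' : (size G' <= k)%N.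
  by rewrite /G' /= asgx /= size_filter; rewrite ltnS in Hs; apply: leq_trans (count_size _ _) Hs.
have subG : forall a b, connect (Defs.implies G') a b -> connect (Defs.implies G0) a b.
  apply: connect_sub => a b /hasP [c0]; rewrite mem_filter => /andP [_ H] H'.
  by apply: connect1; apply/hasP; exists c0.
have [s' Hs'] : exists s, cnf_sat s G'.
  apply: IH => // l; apply/negP => /subG; exact/negP/Hno.
pose s : assignment n := [ffun v => if Rs (v, true) then true else if Rs (v, false) then false else s' v].
have cons : forall l, Rs l -> lit_sat s l.
  case=> v b; rewrite /lit_sat /s ffunE /=; case: b => [-> //|H].
  case E: (Rs (v, true)); last by rewrite H.
  have H2 : connect (Defs.implies G0) (v, false) (negl x) := connect_contra E.
  by have := Hno x; rewrite (connect_trans H H2).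
exists s; apply/allP => c0 Hc0.
case: (boolP (c0 \in G')) => H'.
  have := allP Hs' c0 H'; rewrite mem_filter in H'; case/andP: H' => /andP [].
  rewrite /asg /clause_sat /lit_sat /s !ffunE !negb_or => /andP [/negbTE -> /negbTE ->].
  by case/andP => /negbTE -> /negbTE ->.
rewrite mem_filter Hc0 andbT negb_and !negbK in H'.
have step1 : Rs (negl (lit1 c0)) -> Rs (lit2 c0).
  move=> H; apply: connect_trans H _; apply: connect1; apply/hasP; exists c0 => //.
  by rewrite negl_invol !eqxx orbT.
have step2 : Rs (negl (lit2 c0)) -> Rs (lit1 c0).
  move=> H; apply: connect_trans H _; apply: connect1; apply/hasP; exists c0 => //.
  by rewrite negl_invol !eqxx.
have asgE : forall l : lit n, asg l.1 -> Rs l || Rs (negl l).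
  by case=> v [] /=; rewrite /asg /negl /= // orbC.
rewrite /clause_sat; case/orP: H' => /asgE /orP [H|H].
- by rewrite cons.
- by rewrite (cons _ (step1 H)) orbT.
- by rewrite (cons _ H) orbT.
- by rewrite (cons _ (step2 H)).
Qed.

Lemma inCl (F : cnf n) l l' : (l' \in closureL F [set l]) = connect (Defs.implies F) l l'.
Proof.
rewrite inE; apply/existsP/idP => [[l0 /andP [/set1P -> h]] // | h].
by exists l; rewrite set11 h.
Qed.

Lemma V0_of (F : cnf n) l w : connect (Defs.implies F) l w -> connect (Defs.implies F) l (negl w) ->
  w.1 \in V0 F [set l].
Proof. by rewrite inE !inCl; case: w => v [] /= h1 h2; rewrite h1 h2. Qed.

Lemma prune_sub (F : cnf n) a b : connect (Defs.implies (prune F)) a b -> connect (Defs.implies F) a b.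
Proof.
apply: connect_sub => x y /hasP [c]; rewrite mem_filter => /andP [_ H] H'.
by apply: connect1; apply/hasP; exists c.
Qed.

Lemma prune_noneg (F : cnf n) l : ~~ connect (Defs.implies (prune F)) l (negl l).
Proof.
apply/negP => /connectP [p Hp Hlast]; case: p Hp Hlast => [|y p] /=.
  by case: l => v b _ [] /=; case: b.
case/andP => H1 H2 Hlast.
have Cy : connect (Defs.implies (prune F)) y (negl l) by apply/connectP; exists p.
have ly : connect (Defs.implies F) l y by apply: prune_sub; apply: connect1.
have lny : connect (Defs.implies F) l (negl y).
  by have := connect_contra (prune_sub Cy); rewrite negl_invol.
have ll : connect (Defs.implies F) l l := connect0 _ _.
have lnl : connect (Defs.implies F) l (negl l) := connect_trans ly (prune_sub Cy).
have Vy := V0_of ly lny.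
have Vl := V0_of ll lnl.
case/hasP: H1 => c; rewrite mem_filter => /andP [Hc cF] H.
case/negP: Hc; apply/existsP; exists l; rewrite /conflict cF /=.
have nl1 : (negl l).1 = l.1 by [].
by case/orP: H => /andP [/eqP E1 /eqP E2]; rewrite -[(sval c).1.1.1]/((lit1 c).1) -[(sval c).1.1.2]/((lit2 c).1) E1 E2 nl1 Vy Vl.
Qed.

Lemma Zprune_pos (F : cnf n) : (0 < Defs.Z (prune F))%N.
Proof.
have [s Hs] := sat_aux (leqnn (size (prune F))) (@prune_noneg F).
by rewrite /Defs.Z card_gt0; apply/set0Pn; exists s; rewrite inE.
Qed.
End Sat.
Lemma RplusA : associative Rplus. Proof. by move=> x y z; rewrite Rplus_assoc. Qed.
HB.instance Definition _ := Monoid.isComLaw.Build R R0 Rplus RplusA Rplus_comm Rplus_0_l.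

Section Av.
Variable T : finType.
Hypothesis Qpos : (0 < #|T|)%N.
Local Open Scope R_scope.

Let QR := INR #|T|.
Lemma QR_neq0 : QR <> 0.
Proof. by apply: not_eq_sym; apply: Rlt_not_eq; apply: lt_0_INR; apply/ltP. Qed.

Fixpoint Av (k : nat) (F : seq T -> R) : R :=
  match k with
  | 0%N => F [::]
  | k.+1 => Rdiv (\big[Rplus/R0]_(x : T) Av k (fun s => F (x :: s))) QR
  end.

Lemma sum_scal (c : R) (F : T -> R) :
  \big[Rplus/R0]_(x : T) (c * F x) = c * \big[Rplus/R0]_(x : T) F x.
Proof.
apply: (big_rec2 (fun y1 y2 => y1 = c * y2)); first by ring.
by move=> i y1 y2 _ ->; ring.
Qed.

Lemma sum_const (c : R) : \big[Rplus/R0]_(x : T) c = QR * c.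
Proof.
rewrite big_const /QR; elim: #|T| => [|k IH] /=; first by ring.
rewrite IH; change (c + INR k * c = INR (S k) * c); rewrite S_INR; ring.
Qed.

Lemma sum_add (F G : T -> R) :
  \big[Rplus/R0]_(x : T) (F x + G x) = \big[Rplus/R0]_(x : T) F x + \big[Rplus/R0]_(x : T) G x.
Proof. exact: big_split. Qed.

Lemma Av_ext_size k (F G : seq T -> R) :
  (forall s, size s = k -> F s = G s) -> Av k F = Av k G.
Proof.
elim: k F G => [|k IH] F G H /=; first exact: H.
congr Rdiv; apply: eq_bigr => x _; apply: IH => s Hs; apply: H => /=; by rewrite Hs.
Qed.

Lemma Av_const k c : Av k (fun _ => c) = c.
Proof.
elim: k => [|k IH] //=; rewrite IH sum_const; field; exact: QR_neq0.
Qed.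

Lemma Av_add k (F G : seq T -> R) : Av k (fun s => F s + G s) = Av k F + Av k G.
Proof.
elim: k F G => [|k IH] F G //=.
rewrite (eq_bigr (fun x => Av k (fun s => F (x :: s)) + Av k (fun s => G (x :: s)))).
  by rewrite sum_add; field; exact: QR_neq0.
by move=> x _; rewrite IH.
Qed.

Lemma Av_scal k c (F : seq T -> R) : Av k (fun s => c * F s) = c * Av k F.
Proof.
elim: k F => [|k IH] F //=.
rewrite (eq_bigr (fun x => c * Av k (fun s => F (x :: s)))).
  by rewrite sum_scal; field; exact: QR_neq0.
by move=> x _; rewrite IH.
Qed.

Lemma Av_scalr k c (F : seq T -> R) : Av k (fun s => F s * c) = Av k F * c.
Proof.
rewrite Rmult_comm -Av_scal; congr Av; apply: functional_extensionality => s; ring.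
Qed.

Lemma Av_sub k (F G : seq T -> R) : Av k (fun s => F s - G s) = Av k F - Av k G.
Proof.
have -> : (fun s => F s - G s) = (fun s => F s + (-1) * G s).
  by apply: functional_extensionality => s; ring.
rewrite Av_add Av_scal; ring.
Qed.

Lemma Av_split j k (F : seq T -> R) :
  Av (j + k) F = Av j (fun s => Av k (fun t => F (s ++ t))).
Proof.
elim: j F => [|j IH] F //=.
congr Rdiv; apply: eq_bigr => x _; exact: IH.
Qed.

Lemma Av_take m k (F : seq T -> R) : (k <= m)%N ->
  Av m (fun a => F (take k a)) = Av k F.
Proof.
move=> km; rewrite -(subnKC km) Av_split.
apply: Av_ext_size => s Hs.
have -> : (fun t => F (take k (s ++ t))) = (fun _ => F s).
  by apply: functional_extensionality => t; rewrite take_size_cat.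
exact: Av_const.
Qed.

Lemma sum_tuple k (F : seq T -> R) :
  \big[Rplus/R0]_(a : k.-tuple T) F a = QR ^ k * Av k F.
Proof.
elim: k F => [|k IH] F /=.
  rewrite (eq_bigr (fun _ => F [::])); last by move=> a _; rewrite tuple0.
  rewrite big_const card_tuple /= ; ring.
rewrite (reindex (fun p : T * k.-tuple T => [tuple of p.1 :: p.2])) /=; last first.
  exists (fun t : k.+1.-tuple T => (thead t, [tuple of behead t])) => [[x t] _|t _] /=.
    by rewrite theadE; congr pair; apply: val_inj.
  by rewrite [in RHS](tuple_eta t).
rewrite -(pair_big predT predT (fun x (t : k.-tuple T) => F (x :: t))) /=.
rewrite (eq_bigr (fun x => QR ^ k * Av k (fun s => F (x :: s)))); last by move=> x _; exact: IH.
rewrite sum_scal; field; exact: QR_neq0.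
Qed.

End Av.
Section Main.
Variable n : nat.
Hypothesis Hn : (2 <= n)%N.
Local Open Scope R_scope.
Lemma INR_expn a k : INR (a ^ k)%N = INR a ^ k.
Proof. elim: k => [|k IH] //; by rewrite expnS mult_INR IH. Qed.

Lemma clause_pos : (0 < #|{: clause n}|)%N.
Proof.
have h0 : (0 < n)%N by apply: leq_trans Hn.
have h1 : (1 < n)%N by [].
pose c : clause n := exist _ (Ordinal h0, Ordinal h1, true, true) (erefl true).
by apply/card_gt0P; exists c.
Qed.
Let Qp := clause_pos.

Definition phi (s : seq (clause n)) : R := ln (INR (Defs.Z (prune s))).

Lemma Zpos (s : seq (clause n)) : 0 < INR (Defs.Z (prune s)).
Proof. by apply: lt_0_INR; apply/ltP; apply: Zprune_pos. Qed.

Lemma logratio_eq (A B : seq (clause n)) : logratio (prune A) (prune B) = phi A - phi B.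
Proof.
rewrite /logratio /Rdiv ln_mult ?ln_Rinv /phi; [ring | apply: Zpos | apply: Zpos | ].
by apply: Rinv_0_lt_compat; apply: Zpos.
Qed.

Lemma Expect_Av m (f : Omega n m -> R)
  (h : seq (clause n) -> seq (clause n) -> seq (clause n) -> R) :
  (forall w, f w = h w.1.1 w.1.2 w.2) ->
  Expect f = Av m (fun a => Av m (fun b => Av m (fun c => h a b c))).
Proof.
move=> H; rewrite /Expect big_enum /=.
pose A := m.-tuple (clause n).
rewrite (eq_bigr (fun p : Omega n m => h p.1.1 p.1.2 p.2)) //.
rewrite (eq_bigl (fun p : Omega n m => xpredT p.1 && xpredT p.2)) //.
rewrite -(pair_big xpredT xpredT (fun (p : A * A) (c : A) => h p.1 p.2 c)) /=.
rewrite (eq_bigl (fun p : A * A => xpredT p.1 && xpredT p.2)) //.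
rewrite -(pair_big xpredT xpredT (fun (a b : A) => \big[Rplus/R0]_(c : A) h a b c)) /=.
set Q := INR #|{: clause n}|.
have QR0 : Q <> 0.
  by apply: not_eq_sym; apply: Rlt_not_eq; apply: lt_0_INR; apply/ltP.
rewrite (eq_bigr (fun a : A => Q ^ m * (Q ^ m * Av m (fun b => Av m (h a b))))); last first.
  move=> a _.
  rewrite (eq_bigr (fun b : A => Q ^ m * Av m (h a b))); last by move=> b _; exact: (sum_tuple Qp m (h a b)).
  by rewrite sum_scal (sum_tuple Qp m (fun b => Av m (h a b))).
rewrite sum_scal sum_scal (sum_tuple Qp m (fun a => Av m (fun b => Av m (h a b)))).
rewrite !card_prod card_tuple !mult_INR INR_expn -/Q.
match goal with |- _ * (_ * (_ * ?X)) / _ = ?Y => have ->: Y = X by [] end.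
field; apply: pow_nonzero; exact: QR0.
Qed.


Notation T := (clause n).

Lemma indep_sq m r (X : seq T -> R) : (r <= m)%N ->
  Av m (fun b => Av m (fun c => X (take r b) * X (take r c))) = Av r X * Av r X.
Proof.
move=> rm.
have E : forall b : seq T, Av m (fun c => X (take r b) * X (take r c)) = X (take r b) * Av r X.
  move=> b; rewrite (Av_scal Qp m (X (take r b)) (fun c => X (take r c))).
  by rewrite (Av_take Qp (fun c => X c) rm).
rewrite (functional_extensionality _ _ E).
rewrite (Av_scalr Qp m (Av r X) (fun b => X (take r b))).
by rewrite (Av_take Qp (fun c => X c) rm).
Qed.

Lemma sq_lemma k (A : seq T -> R) b c :
  Av k (fun u => (A u - b) * (A u - b) - (c - b) * (c - b)) =
  Av k (fun u => A u * A u) - 2 * b * Av k A + 2 * b * c - c * c.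
Proof.
have -> : (fun u => (A u - b) * (A u - b) - (c - b) * (c - b)) =
          (fun u => A u * A u + ((-2 * b) * A u + (2 * b * c - c * c))).
  by apply: functional_extensionality => u; ring.
rewrite (Av_add Qp) (Av_add Qp) (Av_scal Qp) (Av_const Qp); ring.
Qed.

Definition K r (s : seq T) : R := Av r (fun t => phi (s ++ t)).
Definition V m k : R := Av k (fun s => K (m - k) s * K (m - k) s).

Lemma DeltaM_eq m M : (1 <= M <= m)%N ->
  DeltaM n m M = Av m (fun a => (K (m - M) (take M a) - K (m - M) (take M.-1 a)) *
                                (K (m - M) (take M a) - K (m - M) (take M.-1 a))).
Proof.
move=> /andP [H1 H2].
rewrite /DeltaM (@Expect_Av m _ (fun a b c =>
   (phi (take M a ++ take (m - M) b) - phi (take M.-1 a ++ take (m - M) b)) *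
   (phi (take M a ++ take (m - M) c) - phi (take M.-1 a ++ take (m - M) c)))); last first.
  by move=> w; rewrite /Phi1 /Phi2 !logratio_eq.
congr Av; apply: functional_extensionality => a.
have := @indep_sq m (m - M) (fun t => phi (take M a ++ t) - phi (take M.-1 a ++ t)) (leq_subr _ _).
rewrite /= => ->.
by rewrite (Av_sub Qp).
Qed.

Lemma DeltaM'_eq m M : (1 <= M <= m)%N ->
  DeltaM' n m M = Av m (fun a => (K (m - M).+1 (take M.-1 a) - K (m - M) (take M.-1 a)) *
                                (K (m - M).+1 (take M.-1 a) - K (m - M) (take M.-1 a))).
Proof.
move=> /andP [H1 H2].
have r1 : ((m - M).+1 <= m)%N by lia.
have r2 : ((m - M) <= (m - M).+1)%N by lia.
rewrite /DeltaM' (@Expect_Av m _ (fun a b c =>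
   (phi (take M.-1 a ++ take (m - M).+1 b) - phi (take M.-1 a ++ take (m - M) b)) *
   (phi (take M.-1 a ++ take (m - M).+1 c) - phi (take M.-1 a ++ take (m - M) c)))); last first.
  by move=> w; rewrite /Phi1 /Phi2 !logratio_eq.
congr Av; apply: functional_extensionality => a.
pose X := fun t => phi (take M.-1 a ++ t) - phi (take M.-1 a ++ take (m - M) t).
have -> : (fun b => Av m (fun c =>
   (phi (take M.-1 a ++ take (m - M).+1 b) - phi (take M.-1 a ++ take (m - M) b)) *
   (phi (take M.-1 a ++ take (m - M).+1 c) - phi (take M.-1 a ++ take (m - M) c)))) =
   (fun b => Av m (fun c => X (take (m - M).+1 b) * X (take (m - M).+1 c))).
  apply: functional_extensionality => b; congr Av; apply: functional_extensionality => c.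
  by rewrite /X !take_takel.
rewrite (indep_sq X r1) /X (Av_sub Qp).
by rewrite (Av_take Qp (fun t => phi (take M.-1 a ++ t)) r2).
Qed.

Lemma diff_eq m M : (1 <= M <= m)%N ->
  Av m (fun a => (K (m - M) (take M a) - K (m - M) (take M.-1 a)) *
                 (K (m - M) (take M a) - K (m - M) (take M.-1 a))) -
  Av m (fun a => (K (m - M).+1 (take M.-1 a) - K (m - M) (take M.-1 a)) *
                 (K (m - M).+1 (take M.-1 a) - K (m - M) (take M.-1 a)))
  = V m M - V m M.-1.
Proof.
case: M => [|p] // /andP [_ Hp] /=.
set r := (m - p.+1)%N.
rewrite -(Av_sub Qp).
pose Psi := fun s => (K r s - K r (take p s)) * (K r s - K r (take p s)) -
   (K r.+1 (take p s) - K r (take p s)) * (K r.+1 (take p s) - K r (take p s)).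
have -> : (fun a => (K r (take p.+1 a) - K r (take p a)) * (K r (take p.+1 a) - K r (take p a)) -
      (K r.+1 (take p a) - K r (take p a)) * (K r.+1 (take p a) - K r (take p a))) =
     (fun a => Psi (take p.+1 a)).
  by apply: functional_extensionality => a; rewrite /Psi take_takel.
rewrite (Av_take Qp Psi Hp).
have E := Av_split p 1 Psi; rewrite addn1 in E; rewrite E; clear E.
rewrite /V -/r.
have E := Av_split p 1 (fun s => K r s * K r s); rewrite addn1 in E; rewrite E; clear E.
rewrite -(Av_sub Qp); apply: Av_ext_size => s Hs.
have -> : (m - p = r.+1)%N by rewrite /r; lia.
have -> : (fun u => Psi (s ++ u)) = (fun u => (K r (s ++ u) - K r s) * (K r (s ++ u) - K r s) -
      (K r.+1 s - K r s) * (K r.+1 s - K r s)).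
  by apply: functional_extensionality => u; rewrite /Psi take_size_cat.
rewrite sq_lemma.
have -> : Av 1 (fun u => K r (s ++ u)) = K r.+1 s.
  rewrite /K; have E := Av_split 1 r (fun t => phi (s ++ t)); rewrite add1n in E; rewrite E.
  congr Av; apply: functional_extensionality => u; congr Av.
  by apply: functional_extensionality => t; rewrite catA.
ring.
Qed.

End Main.

Lemma telescope (f : nat -> R) k :
  \big[Rplus/R0]_(1 <= M < k.+1) Rminus (f M) (f M.-1) = Rminus (f k) (f 0%N).
Proof.
elim: k => [|k IH]; first by rewrite big_geq //; ring.
by rewrite big_nat_recr //= IH; ring.
Qed.

Theorem lemma2p4 (d : R) (mseq : nat -> nat) :
  Rlt R0 d /\ Rlt d (INR 2) ->
  Un_cv (fun k => Rdiv (INR (mseq k)) (Rdiv (Rmult d (INR k)) (INR 2))) R1 ->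
  forall n : nat, (2 <= n)%N ->
  Var (logZhat (n := n) (m := mseq n)) =
  \big[Rplus/R0]_(1 <= M < (mseq n).+1)
     Rminus (DeltaM n (mseq n) M) (DeltaM' n (mseq n) M).
Proof.
move=> _ _ n Hn.
have Qp := clause_pos Hn.
rewrite (eq_big_nat _ _ (F2 := fun M => Rminus (V n (mseq n) M) (V n (mseq n) M.-1))); last first.
  move=> M HM; rewrite (DeltaM_eq Hn HM) (DeltaM'_eq Hn HM).
  exact: diff_eq.
rewrite telescope /Var.
rewrite (@Expect_Av n Hn (mseq n) _ (fun a _ _ => Rmult (phi a) (phi a))) //.
rewrite (@Expect_Av n Hn (mseq n) _ (fun a _ _ => phi a)) //.
rewrite /V subnn subn0 /=.
have C : forall X : R, Av (mseq n) (fun _ : seq (clause n) => Av (mseq n) (fun _ : seq (clause n) => X)) = X.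
  by move=> X; rewrite !(Av_const Qp).
rewrite (functional_extensionality _ _ (fun a => C (Rmult (phi a) (phi a)))).
rewrite (functional_extensionality _ _ (fun a => C (phi a))).
have -> : (fun s : seq (clause n) => Rmult (K 0 s) (K 0 s)) = (fun a => Rmult (phi a) (phi a)).
  by apply: functional_extensionality => s; rewrite /K /= cats0.
by [].
Qed.
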